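(* Let $n\ge1$ and $0<\epsilon\le 1$. Every symmetric pseudo-Boolean function $f:\{0,1\}^n\to\mathbb{R}$, with $f(x)=k_{|x|}$, can be represented uniquely in the form \[ f(x)=\sum_{i=0}^{n}\alpha_i\,\min\Bigl(0,\; i-\epsilon-\sum_{r=1}^n x_r\Bigr)\quad\text{for all }x\in\{0,1\}^n, \] and the coefficients are, for $j=0,1,\ldots,n$, \[ \alpha_j=-\sum_{i=0}^{j-2}\frac{(\epsilon-1)^{j-i-2}}{\epsilon^{j-i+1}}\,k_i+\Bigl(\frac1\epsilon+\frac1{\epsilon^2}\Bigr)k_{j-1}-\frac1\epsilon k_j, \] where the first sum is $0$ when $j<2$ and $k_{-1}:=0$.
   Context: A pseudo-Boolean function is a map $\{0,1\}^n\to\mathbb{R}$; it is symmetric if there are reals $k_0,\ldots,k_n$ with $f(x)=k_l$ whenever the Hamming weight $|x|=\sum_j x_j$ equals $l$. The expression $(\epsilon-1)^0$ is interpreted as $1$ (also when $\epsilon=1$). *)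

(* Defs.v *)
From HB Require Import structures.
From mathcomp Require Import all_boot all_order all_algebra.
Set Implicit Arguments. Unset Strict Implicit. Unset Printing Implicit Defensive.
Import Order.TTheory GRing.Theory Num.Theory.
Local Open Scope ring_scope.

Definition hweight (n : nat) (x : {ffun 'I_n -> bool}) : nat :=
  (\sum_(r < n) (x r : nat))%N.

Definition kprev (R : pzRingType) (k : nat -> R) (j : nat) : R :=
  if j is j'.+1 then k j' else 0.

Definition alpha_coef (R : fieldType) (eps : R) (k : nat -> R) (j : nat) : R :=
  - (\sum_(0 <= i < j.-1) ((eps - 1) ^+ (j - i - 2)%N / eps ^+ (j - i + 1)%N) * k i)
  + (1 / eps + 1 / eps ^+ 2) * kprev k j - (1 / eps) * k j.

Definition represents (R : realFieldType) (n : nat) (eps : R)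
    (f : {ffun 'I_n -> bool} -> R) (alpha : {ffun 'I_n.+1 -> R}) : Prop :=
  forall x : {ffun 'I_n -> bool},
    f x = \sum_(i < n.+1) alpha i * Num.min 0 ((i : nat)%:R - eps - (hweight x)%:R).

(* Main.v *)
Require Import Defs.
From HB Require Import structures.
From mathcomp Require Import all_boot all_order all_algebra.
From mathcomp Require Import ring lra zify.
Import Order.TTheory GRing.Theory Num.Theory.
Local Open Scope ring_scope.

Definition Sx (R : realFieldType) (e : R) (a : nat -> R) (l : nat) : R :=
  \sum_(i < l.+1) a i * ((i : nat)%:R - e - l%:R).
Arguments Sx {R}.

Lemma enz {R : realFieldType} {e : R} (e0 : 0 < e) : e != 0.
Proof. by rewrite gt_eqF. Qed.

Lemma min_eval {R : realFieldType} {e : R} (e0 : 0 < e) (e1 : e <= 1) (i l : nat) :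
  Num.min 0 (i%:R - e - l%:R) = if (i <= l)%N then i%:R - e - l%:R else 0.
Proof.
case: (leqP i l) => H.
  have h : (i%:R <= l%:R :> R) by rewrite ler_nat.
  have hn : i%:R - e - l%:R <= 0 by lra.
  by rewrite min_r.
have : ((l.+1)%:R <= i%:R :> R) by rewrite ler_nat.
rewrite -natr1 => h.
have hn : 0 <= i%:R - e - l%:R by lra.
by rewrite min_l.
Qed.

Lemma T1 (R : realFieldType) (e : R) (a : nat -> R) l :
  Sx e a l.+1 = Sx e a l - \sum_(i < l.+1) a i - e * a l.+1.
Proof.
rewrite /Sx big_ord_recr /=.
have -> : \sum_(i < l.+1) a i * ((i : nat)%:R - e - l.+1%:R)
   = \sum_(i < l.+1) (a i * ((i : nat)%:R - e - l%:R) - a i).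
  by apply: eq_bigr => i _; rewrite -natr1; ring.
rewrite sumrB; ring.
Qed.

Lemma R1 {R : realFieldType} {e : R} (k : nat -> R) (e0 : 0 < e) l :
  e * alpha_coef e k l.+1 = (e - 1) * alpha_coef e k l - k l.+1 + 2 * k l - kprev k l.
Proof.
have ez := enz e0.
case: l => [|l].
  rewrite /alpha_coef /= !big_geq //; field; done.
rewrite /alpha_coef /=.
rewrite big_nat_recr //=.
have -> : \sum_(0 <= i < l) ((e - 1) ^+ (l.+2 - i - 2) / e ^+ (l.+2 - i + 1) * k i)
   = (e - 1) / e * \sum_(0 <= i < l) ((e - 1) ^+ (l.+1 - i - 2) / e ^+ (l.+1 - i + 1) * k i).
  rewrite big_distrr /=; apply: eq_big_nat => i /andP [_ hi].
  have E1 : (l.+2 - i - 2 = (l.+1 - i - 2).+1)%N by lia.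
  have E2 : (l.+2 - i + 1 = (l.+1 - i + 1).+1)%N by lia.
  rewrite E1 E2 !exprS; field.
  by rewrite expf_neq0 // ez.
have E3 : (l.+2 - l - 2 = 0)%N by lia.
have E4 : (l.+2 - l + 1 = 3)%N by lia.
rewrite E3 E4.
set s := \sum_(0 <= i < l) _.
field; done.
Qed.

Lemma H {R : realFieldType} {e : R} (k : nat -> R) (e0 : 0 < e) l :
  k l - kprev k l = - \sum_(i < l) alpha_coef e k i - e * alpha_coef e k l.
Proof.
have ez := enz e0.
elim: l => [|l IH].
  rewrite big_ord0 /alpha_coef /= big_geq //; field; done.
rewrite big_ord_recr /=.
have := R1 k e0 l; move: IH; rewrite /=.
set A := \sum_(i < l) alpha_coef e k i => IH R1'.
lra.
Qed.

Lemma G {R : realFieldType} {e : R} (k : nat -> R) (e0 : 0 < e) l :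
  Sx e (alpha_coef e k) l = k l.
Proof.
elim: l => [|l IH].
  rewrite /Sx big_ord1 /=.
  have := H k e0 0; rewrite big_ord0 /= => h. lra.
rewrite T1 IH.
have := H k e0 l.+1; rewrite /= => h. lra.
Qed.

Lemma U {R : realFieldType} {e : R} (e0 : 0 < e) n (a b : nat -> R) :
  (forall l, (l <= n)%N -> Sx e a l = Sx e b l) -> forall l, (l <= n)%N -> a l = b l.
Proof.
have ez := enz e0.
move=> hs l; elim/ltn_ind: l => l IH hl.
have := hs l hl; rewrite /Sx !big_ord_recr /=.
rewrite (eq_bigr (fun i : 'I_l => b i * ((i : nat)%:R - e - l%:R))); last first.
  move=> i _; rewrite IH //; apply: leq_trans hl; exact: ltnW (ltn_ord i).
move/addrI => h.
have h2 : (a l - b l) * e = 0.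
  have -> : (a l - b l) * e = - (a l * (l%:R - e - l%:R) - b l * (l%:R - e - l%:R)) by ring.
  by rewrite h subrr oppr0.
move/eqP: h2; rewrite mulf_eq0 (negbTE ez) orbF subr_eq0.
by move/eqP.
Qed.

Lemma Rep {R : realFieldType} {e : R} (e0 : 0 < e) (e1 : e <= 1) n
    (alpha : {ffun 'I_n.+1 -> R}) l : (l <= n)%N ->
  \sum_(i < n.+1) alpha i * Num.min 0 ((i : nat)%:R - e - l%:R)
  = Sx e (fun i => alpha (inord i)) l.
Proof.
move=> hl; rewrite /Sx.
rewrite (big_ord_widen n.+1 (fun i => alpha (inord i) * ((i : nat)%:R - e - l%:R))) //.
rewrite [in RHS]big_mkcond /=; apply: eq_bigr => i _.
by rewrite inord_val (min_eval e0 e1) ltnS; case: (i <= l)%N; rewrite ?mulr0.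
Qed.

Lemma sum_lt n l : (\sum_(r < n) ((r < l)%N : nat))%N = minn l n.
Proof.
elim: n => [|n IH]; first by rewrite big_ord0; lia.
rewrite big_ord_recr /= IH; case: (ltnP n l) => h /=; lia.
Qed.

Lemma hweight_le n (x : {ffun 'I_n -> bool}) : (hweight x <= n)%N.
Proof.
rewrite /hweight.
apply: (@leq_trans (\sum_(i < n) 1)%N).
  by apply: leq_sum => i _; exact: leq_b1.
by rewrite sum_nat_const card_ord muln1.
Qed.

Theorem theorem2 (R : realFieldType) (n : nat) (eps : R)
    (f : {ffun 'I_n -> bool} -> R) (k : nat -> R) :
  (1 <= n)%N -> 0 < eps -> eps <= 1 ->
  (forall x : {ffun 'I_n -> bool}, f x = k (hweight x)) ->
  (exists! alpha : {ffun 'I_n.+1 -> R}, represents eps f alpha) /\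
  (forall alpha : {ffun 'I_n.+1 -> R}, represents eps f alpha ->
     forall j : 'I_n.+1, alpha j = alpha_coef eps k j).
Proof.
move=> _ e0 e1 hf.
have part2 : forall alpha : {ffun 'I_n.+1 -> R}, represents eps f alpha ->
     forall j : 'I_n.+1, alpha j = alpha_coef eps k j.
  move=> alpha hr j.
  have hU := @U _ _ e0 n (fun i => alpha (inord i)) (alpha_coef eps k).
  rewrite -{1}(inord_val j); apply: hU; last by rewrite -ltnS.
  move=> l hl; rewrite G //.
  pose x := [ffun r : 'I_n => (r < l)%N].
  have hx : hweight x = l.
    rewrite /hweight (eq_bigr (fun r : 'I_n => ((r < l)%N : nat))).
      by rewrite sum_lt; lia.
    by move=> r _; rewrite ffunE.
  by rewrite -(@Rep _ _ e0 e1 n alpha l hl) -hx -hr hf hx.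
split=> //.
exists [ffun j : 'I_n.+1 => alpha_coef eps k j]; split.
  move=> x; rewrite hf (@Rep _ _ e0 e1 n _ _ (hweight_le _ x)) -(G k e0 (hweight x)).
  rewrite /Sx; apply: eq_bigr => i _; rewrite ffunE inordK //.
  apply: leq_trans (ltn_ord i) _; by rewrite ltnS hweight_le.
move=> b hb; apply/ffunP => j; by rewrite ffunE part2.
Qed.
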